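(* Let $C,D\in\mathrm{Ch}_\Phi$ and let $\Psi$ be a root subsystem of $\Phi$. Then $C$ lifts $D_\Psi$ if and only if there exists a subset $X\subset\Phi^s(C)\cap\Phi^+(D)$ such that $\Psi=\mathbb R X\cap\Phi$. Moreover, if these conditions hold, then one can take $X=\Psi^s(D_\Psi)$.
   Context: $E$ is a finite-dimensional real Euclidean space with inner product $(\cdot,\cdot)$; $\Phi\subset E$ is a finite (reduced) root system (not necessarily spanning $E$, not necessarily crystallographic), with reflections $\omega_\alpha$ through $L_\alpha=\alpha^\perp$. A root subsystem is a nonempty $\Psi\subset\Phi$ stable under $\omega_\alpha$, $\alpha\in\Psi$. $\mathbb R X$ denotes the real linear span of $X$. For $X\subset\Phi$, $\mathrm{Ch}_X$ is the set of connected components of $E\setminus\bigcup_{\alpha\in X}L_\alpha$; for $D\in\mathrm{Ch}_\Phi$, $D_\Psi$ is the chamber of $\mathrm{Ch}_\Psi$ containing $D$. For $C\in\mathrm{Ch}_\Phi$, $\Phi^+(C)=\{\alpha\in\Phi:(e,\alpha)>0\ \forall e\in C\}$ and $\Phi^s(C)$ is the unique simple system of $\Phi$ contained in $\Phi^+(C)$ (a simple system is a linearly independent subset $S$ such that each root is a linear combination of elements of $S$ with all coefficients $\ge0$ or all $\le0$). Similarly $\Psi^+(F)$, $\Psi^s(F)$ for $F\in\mathrm{Ch}_\Psi$. A chamber $C\in\mathrm{Ch}_\Phi$ lifts $F\in\mathrm{Ch}_\Psi$ if $\Psi^s(F)\subset\Phi^s(C)$. *)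

(* Defs.v *)
(* The Euclidean space E is modelled as 'rV[R]_n (R : realType) with the
   standard dot product; its topology is the canonical one of mathcomp-analysis. *)
From HB Require Import structures.
From mathcomp Require Import all_boot all_order all_algebra.
From mathcomp Require Import all_classical all_reals topology normedtype matrix_topology matrix_normedtype.
Set Implicit Arguments. Unset Strict Implicit. Unset Printing Implicit Defensive.
Import Order.TTheory GRing.Theory Num.Theory.
Import numFieldTopology.Exports numFieldNormedType.Exports.
Local Open Scope ring_scope.
Local Open Scope classical_set_scope.

Section RootDefs.
Variables (R : realType) (n : nat).
Notation E := 'rV[R]_n.

Definition dotE (u v : E) : R := (u *m v^T) 0 0.

Definition reflE (a v : E) : E := v - ((2 * dotE v a) / dotE a a) *: a.

(* finite reduced (not necessarily crystallographic or spanning) root system *)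
Definition root_system (Phi : set E) : Prop :=
  [/\ finite_set Phi, ~ Phi 0,
      (forall a (c : R), Phi a -> Phi (c *: a) -> c = 1 \/ c = -1)
    & (forall a b, Phi a -> Phi b -> Phi (reflE a b))].

Definition root_subsystem (Phi Psi : set E) : Prop :=
  [/\ Psi `<=` Phi, Psi !=set0 & (forall a b, Psi a -> Psi b -> Psi (reflE a b))].

Definition rspan (X : set E) : set E :=
  [set v | exists s : seq E, {subset s <= X} /\ v \in <<s>>%VS].

Definition hyp_compl (X : set E) : set E := [set e | forall a, X a -> dotE e a != 0].

Definition chambers (X : set E) : set (set E) :=
  [set C | exists e, hyp_compl X e /\ C = connected_component (hyp_compl X) e].

Definition pos_roots (Phi C : set E) : set E :=
  [set a | Phi a /\ forall e, C e -> 0 < dotE e a].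

Definition simple_system (Phi S : set E) : Prop :=
  S `<=` Phi /\
  exists s : seq E,
    [/\ uniq s, S = [set x | x \in s], free s &
        forall b, Phi b -> exists c : E -> R,
          b = \sum_(a <- s) c a *: a /\
          ((forall a, a \in s -> 0 <= c a) \/ (forall a, a \in s -> c a <= 0))].

(* S is the (unique) simple system of Phi contained in Phi^+(C), i.e. S = Phi^s(C) *)
Definition simple_roots_of (Phi C S : set E) : Prop :=
  simple_system Phi S /\ S `<=` pos_roots Phi C.

End RootDefs.

(* Main.v *)
Require Import Defs.
From HB Require Import structures.
From mathcomp Require Import all_boot all_order all_algebra.
From mathcomp Require Import lra zify.
From mathcomp Require Import all_classical all_reals topology normedtype matrix_topology matrix_normedtype.
Import Order.TTheory GRing.Theory Num.Theory.
Import numFieldTopology.Exports numFieldNormedType.Exports.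
Local Open Scope ring_scope.
Local Open Scope classical_set_scope.
Set Implicit Arguments. Unset Strict Implicit.

Section Aux.
Variables (R : realType) (n : nat).
Notation E := 'rV[R]_n.

Lemma dotE_sum (u v : E) : dotE u v = \sum_(k < n) u 0 k * v 0 k.
Proof. by rewrite /dotE mxE; apply: eq_bigr => k _; rewrite mxE. Qed.

Lemma dotEC (u v : E) : dotE u v = dotE v u.
Proof. by rewrite !dotE_sum; apply: eq_bigr => k _; rewrite mulrC. Qed.

Lemma dotEDl (u v w : E) : dotE (u + v) w = dotE u w + dotE v w.
Proof. by rewrite !dotE_sum -big_split; apply: eq_bigr => k _; rewrite mxE mulrDl. Qed.

Lemma dotEZl c (u w : E) : dotE (c *: u) w = c * dotE u w.
Proof. by rewrite !dotE_sum mulr_sumr; apply: eq_bigr => k _; rewrite mxE mulrA. Qed.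

Lemma dotE0l (w : E) : dotE 0 w = 0.
Proof. by rewrite -(scale0r (0 : E)) dotEZl mul0r. Qed.

Lemma dotENl (u w : E) : dotE (- u) w = - dotE u w.
Proof. by rewrite -scaleN1r dotEZl mulN1r. Qed.

Lemma dotEBl (u v w : E) : dotE (u - v) w = dotE u w - dotE v w.
Proof. by rewrite dotEDl dotENl. Qed.

Lemma dotE_suml I (r : seq I) (P : pred I) (F : I -> E) w :
  dotE (\sum_(i <- r | P i) F i) w = \sum_(i <- r | P i) dotE (F i) w.
Proof. exact: (big_morph (fun u => dotE u w) (fun u v => dotEDl u v w) (dotE0l w)). Qed.

Lemma dotE_gt0 (v : E) : v != 0 -> 0 < dotE v v.
Proof.
move=> v0; rewrite dotE_sum lt_def sumr_ge0 ?andbT; last by move=> k _; rewrite -expr2 sqr_ge0.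
apply/negP => /eqP H; move/negP: v0; apply; apply/eqP/rowP => k; rewrite mxE.
have H2 : \sum_(k0 < n) v 0 k0 ^+ 2 = 0.
  by rewrite -[RHS]H; apply: eq_bigr => j _; rewrite expr2.
have := psumr_eq0P (fun j _ => sqr_ge0 (v 0 j)) H2 (i := k) isT.
by move/eqP; rewrite sqrf_eq0 => /eqP.
Qed.

Lemma reflE_dot (a v : E) : a != 0 -> dotE (reflE a v) a = - dotE v a.
Proof.
move=> a0; have aa := dotE_gt0 a0.
rewrite /reflE dotEBl dotEZl mulfVK ?gt_eqF //; lra.
Qed.

Lemma reflEK (a v : E) : a != 0 -> reflE a (reflE a v) = v.
Proof.
move=> a0; rewrite {1}/reflE reflE_dot // /reflE mulrN mulNr scaleNr opprK.
by rewrite subrK.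
Qed.

Lemma reflE_self (a : E) : a != 0 -> reflE a a = - a.
Proof.
move=> a0; have aa := dotE_gt0 a0.
rewrite /reflE mulfK ?gt_eqF // scaler_nat mulr2n opprD addrA subrr add0r.
done.
Qed.

Lemma dot_cont (x : E) : continuous (fun e : E => dotE e x).
Proof.
have -> : (fun e : E => dotE e x) = (fun e : E => \sum_(k <- index_enum 'I_n) e 0 k * x 0 k).
  by apply: funext => e; rewrite dotE_sum.
elim: (index_enum _) => [|k l IH].
  under eq_fun do rewrite big_nil; exact: cst_continuous.
under eq_fun do rewrite big_cons.
move=> e; apply: (@continuousD R _ _ (fun e0 : E => e0 0 k * x 0 k)
   (fun e0 : E => \sum_(k0 <- l) e0 0 k0 * x 0 k0)); last exact: IH.
apply: (@continuousM R _ (fun e0 : E => e0 0 k) (fun=> x 0 k));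
  [exact: coord_continuous | exact: cst_continuous].
Qed.

Lemma chamber_sign (Psi F : set E) x d f : chambers Psi F -> Psi x ->
  F d -> F f -> 0 < dotE d x -> 0 < dotE f x.
Proof.
case=> e [He ->] Px Fd Ff dx.
have sub := @connected_component_sub _ (hyp_compl Psi) e.
have Beq : connected_component (hyp_compl Psi) e `&` ((fun y => dotE y x) @^-1` [set r | 0 < r])
   = connected_component (hyp_compl Psi) e.
  apply: component_connected.
  - by exists d.
  - exists ((fun y => dotE y x) @^-1` [set r | 0 < r]) => //.
    by apply: open_comp; [move=> y _; exact: dot_cont | exact: open_gt].
  - exists ((fun y => dotE y x) @^-1` [set r | 0 <= r]).
      by apply: preimage_closed; [move=> y _; exact: dot_cont | exact: closed_ge].
    apply/seteqP; split => y [Ky /= H]; split => //=; first exact: ltW.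
    by rewrite lt_def H andbT; exact: (sub _ Ky _ Px).
by have [] : (connected_component (hyp_compl Psi) e `&` ((fun y => dotE y x) @^-1` [set r | 0 < r])) f by rewrite Beq.
Qed.


Lemma coord_sum_seq (s : seq E) (c : E -> R) (i : 'I_(size s)) : free s ->
  coord (in_tuple s) i (\sum_(a <- s) c a *: a) = c s`_i.
Proof.
move=> fs; rewrite (big_nth 0) big_mkord.
exact: (coord_sum_free (fun j : 'I_(size s) => c s`_j)).
Qed.

Definition rep (s : seq E) (b : E) :=
  b = \sum_(i < size s) coord (in_tuple s) i b *: s`_i /\
  ((forall i, 0 <= coord (in_tuple s) i b) \/ (forall i, coord (in_tuple s) i b <= 0)).

Lemma ss_rep (Phi : set E) (s : seq E) : free s ->
  (forall b, Phi b -> exists c : E -> R, b = \sum_(a <- s) c a *: a /\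
     ((forall a, a \in s -> 0 <= c a) \/ (forall a, a \in s -> c a <= 0))) ->
  forall b, Phi b -> rep s b.
Proof.
move=> fs H b /H [c [-> Hc]].
have Hk i : coord (in_tuple s) i (\sum_(a <- s) c a *: a) = c s`_i by exact: coord_sum_seq.
split.
  under [RHS]eq_bigr => i _ do rewrite Hk.
  by rewrite (big_nth 0) big_mkord.
by case: Hc => H'; [left|right] => i; rewrite Hk; apply: H'; apply: mem_nth.
Qed.

Lemma coord_span0 (s : seq E) (P : E -> Prop) (sq : seq E) (beta : E) (i : 'I_(size s)) :
  free s -> (forall y, y \in sq -> y \in s /\ P y) -> ~ P s`_i ->
  beta \in <<sq>>%VS -> coord (in_tuple s) i beta = 0.
Proof.
move=> fs Hq Ni /(@coord_span _ _ _ (in_tuple sq)) ->.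
rewrite linear_sum big1 // => j _; rewrite linearZ /=.
have [ys Pj] := Hq _ (mem_nth 0 (ltn_ord j)).
have Hk := nth_index 0 ys.
have kl : (index (nth (0%R:E) sq j) s < size s)%N by rewrite index_mem.
rewrite -Hk (@coord_free _ _ _ (in_tuple s) (Ordinal kl) i) //.
case: eqP => [Ek|_]; last by rewrite mulr0.
by exfalso; apply: Ni; rewrite -Ek /= Hk.
Qed.

Lemma cnt_lt (T : eqType) (P Q : pred T) (l : seq T) y :
  (forall z, Q z -> P z) -> y \in l -> P y -> ~~ Q y -> (count Q l < count P l)%N.
Proof.
move=> QP yl Py nQy.
have le l' : (count Q l' <= count P l')%N by apply: sub_count => z; apply: QP.
elim: l yl => [//|z l IH]; rewrite in_cons => /orP [/eqP <-|yl] /=.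
  by rewrite Py (negbTE nQy) add0n add1n ltnS.
have := IH yl; have := QP z; case: (Q z); case: (P z) => //= H; try lia.
Qed.


Lemma keyK (Phi Psi : set E) (s : seq E) (e0 : E) (X : E -> Prop) :
  root_system Phi -> Psi `<=` Phi -> (forall a b, Psi a -> Psi b -> Psi (reflE a b)) ->
  free s -> (forall b, Phi b -> rep s b) -> (forall a, a \in s -> Phi a) ->
  (forall i : 'I_(size s), 0 < dotE e0 s`_i) ->
  (forall i : 'I_(size s), X s`_i -> Psi s`_i) ->
  forall beta, Phi beta ->
    (forall i : 'I_(size s), ~ X s`_i -> coord (in_tuple s) i beta = 0) -> Psi beta.
Proof.
move=> [finPhi Phi0 red refl] sub reflPsi fs Hrep sPhi pos XPsi.
have nz b : Phi b -> b != 0 by move=> Pb; apply/eqP => b0; apply: Phi0; rewrite -b0.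
have [phiL phiLE] := (finite_seqP Phi).1 finPhi.
have inL b : Phi b -> b \in phiL by rewrite phiLE.
suff Hpos : forall beta, Phi beta -> (forall i, 0 <= coord (in_tuple s) i beta) ->
    (forall i : 'I_(size s), ~ X s`_i -> coord (in_tuple s) i beta = 0) -> Psi beta.
  move=> beta Pb Hsupp; case: (Hrep _ Pb) => _ [Hnn|Hnp]; first exact: Hpos.
  have Pnb : Phi (- beta) by rewrite -reflE_self ?nz //; apply: refl.
  have Pn : Psi (- beta).
    apply: Hpos => // i; first by rewrite linearN /= oppr_ge0.
    by move=> Ni; rewrite linearN /= Hsupp // oppr0.
  by rewrite -(opprK beta) -reflE_self ?nz //; exact: reflPsi.
pose mu beta := count (fun g => dotE e0 g < dotE e0 beta) phiL.
suff: forall k beta, (mu beta < k)%N -> Phi beta ->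
    (forall i, 0 <= coord (in_tuple s) i beta) ->
    (forall i : 'I_(size s), ~ X s`_i -> coord (in_tuple s) i beta = 0) -> Psi beta.
  by move=> H beta; apply: (H (mu beta).+1).
elim=> [//|k IH] beta Hk Pb Hnn Hsupp.
have [Hb Hsign] := Hrep _ Pb.
have bb := dotE_gt0 (nz _ Pb).
have Hsum : dotE beta beta = \sum_(i < size s) coord (in_tuple s) i beta * dotE s`_i beta.
  by rewrite {1}Hb dotE_suml; apply: eq_bigr => i _; rewrite dotEZl.
have [i Hi] : exists i, 0 < coord (in_tuple s) i beta * dotE s`_i beta.
  apply: contrapT => /forallNP H.
  have : dotE beta beta <= 0.
    by rewrite Hsum; apply: sumr_le0 => i _; rewrite leNgt; apply/negP; exact: H i.
  by rewrite leNgt bb.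
have ci : 0 < coord (in_tuple s) i beta.
  rewrite lt_def Hnn andbT; apply/eqP => c0; move: Hi; rewrite c0 mul0r ltxx.
  by [].
have di : 0 < dotE s`_i beta by move: Hi; rewrite pmulr_rgt0.
have Xi : X s`_i by apply: contrapT => Ni; move: ci; rewrite Hsupp // ltxx.
have Px : Phi s`_i by apply: sPhi; apply: mem_nth.
have x0 := nz _ Px.
have [->|bx] := eqVneq beta s`_i; first exact: XPsi.
set kk := 2 * dotE beta s`_i / dotE s`_i s`_i.
have kk0 : 0 < kk.
  rewrite /kk dotEC; apply: divr_gt0; [apply: mulr_gt0 => // | exact: dotE_gt0].
have Pb' : Phi (reflE s`_i beta) by apply: refl.
have Hc' j : coord (in_tuple s) j (reflE s`_i beta) =
    coord (in_tuple s) j beta - kk * (i == j)%:R.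
  by rewrite /reflE -/kk linearB linearZ /= (@coord_free _ _ _ (in_tuple s) i j).
have Hnn' : forall j, 0 <= coord (in_tuple s) j (reflE s`_i beta).
  case: (Hrep _ Pb') => _ [//|Hnp]; exfalso.
  have Hz j : j != i -> coord (in_tuple s) j beta = 0.
    move=> ji; apply/eqP; rewrite eq_le Hnn andbT.
    by have := Hnp j; rewrite Hc' eq_sym (negbTE ji) mulr0 subr0.
  have Hbx : beta = coord (in_tuple s) i beta *: s`_i.
    rewrite {1}Hb (bigD1 i) //= big1 ?addr0 // => j ji.
    by rewrite Hz ?scale0r.
  have Pc : Phi (coord (in_tuple s) i beta *: s`_i) by rewrite -Hbx.
  case: (red _ _ Px Pc) => Hc.
    by move/negP: bx; apply; rewrite {1}Hbx Hc scale1r.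
  by move: ci; rewrite Hc oppr_gt0 ltr10.
have Hsupp' (j : 'I_(size s)) : ~ X s`_j -> coord (in_tuple s) j (reflE s`_i beta) = 0.
  move=> Nj; rewrite Hc' Hsupp //.
  have ij : i != j by apply/eqP => ij; apply: Nj; rewrite -ij.
  by rewrite (negbTE ij) mulr0 subr0.
have lt_e0 : dotE e0 (reflE s`_i beta) < dotE e0 beta.
  rewrite dotEC /reflE -/kk dotEBl dotEZl (dotEC beta) (dotEC s`_i).
  have := pos i => pe; have := mulr_gt0 kk0 pe; lra.
have Psib' : Psi (reflE s`_i beta).
  apply: IH => //.
  rewrite ltnS in Hk; apply: leq_trans Hk; rewrite /mu.
  apply: (cnt_lt (y := reflE s`_i beta)).
  - by move=> z /= Hz; exact: lt_trans Hz lt_e0.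
  - exact: inL.
  - exact: lt_e0.
  - by rewrite /= ltxx.
rewrite -(reflEK beta x0); apply: reflPsi => //; exact: XPsi.
Qed.


Lemma rep_dot (s : seq E) b f : rep s b ->
  dotE f b = \sum_(i < size s) coord (in_tuple s) i b * dotE f s`_i.
Proof.
case=> Hb _; rewrite dotEC {1}Hb dotE_suml; apply: eq_bigr => i _.
by rewrite dotEZl dotEC.
Qed.

Lemma rep_nonneg (s : seq E) b f : rep s b -> 0 < dotE f b ->
  (forall i, coord (in_tuple s) i b != 0 -> 0 < dotE f s`_i) ->
  forall i, 0 <= coord (in_tuple s) i b.
Proof.
move=> Hr fb Hp; case: (Hr) => _ [//|Hnp]; exfalso.
have : dotE f b <= 0.
  rewrite (rep_dot f Hr); apply: sumr_le0 => i _.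
  have [->|nz] := eqVneq (coord (in_tuple s) i b) 0; first by rewrite mul0r.
  by apply: mulr_le0_ge0 => //; apply: ltW; apply: Hp.
by rewrite leNgt fb.
Qed.

End Aux.

Unset Implicit Arguments.
Set Strict Implicit.

Theorem lemma2 (R : realType) (n : nat) (Phi Psi C D F SC SF : set 'rV[R]_n) :
  root_system Phi -> root_subsystem Phi Psi ->
  chambers Phi C -> chambers Phi D ->
  chambers Psi F -> D `<=` F ->
  simple_roots_of Phi C SC -> simple_roots_of Psi F SF ->
  (SF `<=` SC <->
     exists X : set 'rV[R]_n,
       X `<=` SC `&` pos_roots Phi D /\ Psi = rspan X `&` Phi)
  /\ (SF `<=` SC -> SF `<=` SC `&` pos_roots Phi D /\ Psi = rspan SF `&` Phi).
Proof.
move=> HPhi [subPsi Psi0 reflPsi] [eC [HeC Ceq]] [eD [HeD Deq]] hF DF.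
move=> [[SCsub [sc [usc SCeq fsc Hsc]]] SCpos] [[SFsub [sf [usf SFeq fsf Hsf]]] SFpos].
have CeC : C eC by rewrite Ceq; exact: connected_component_refl.
have DeD : D eD by rewrite Deq; exact: connected_component_refl.
have repC := ss_rep fsc Hsc.
have repF := ss_rep fsf Hsf.
have inSC a : SC a <-> a \in sc by rewrite SCeq.
have inSF a : SF a <-> a \in sf by rewrite SFeq.
have scPhi a : a \in sc -> Phi a by move=> /inSC /SCsub.
have posC (i : 'I_(size sc)) : 0 < dotE eC sc`_i.
  by apply: (SCpos _ _).2 => //; apply/inSC; apply: mem_nth.
have fwd : SF `<=` SC -> SF `<=` SC `&` pos_roots Phi D /\ Psi = rspan SF `&` Phi.
  move=> H; split.
    move=> x Hx; split; first exact: H.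
    split; first exact: subPsi (SFsub _ Hx).
    by move=> e De; apply: (SFpos _ Hx).2; apply: DF.
  apply/seteqP; split => b.
    move=> Pb; split; last exact: subPsi.
    exists sf; split; first by move=> y ysf; rewrite in_setE; apply/inSF.
    have [c [-> _]] := Hsf _ Pb.
    rewrite big_seq; apply: memv_suml => a asf; apply: memvZ; exact: memv_span.
  move=> [[sq [sqsub bsp]] Pb].
  apply: (keyK HPhi subPsi reflPsi fsc repC scPhi posC (X := SF)) => //.
    by move=> i /SFsub.
  move=> i Ni; apply: (coord_span0 (P := SF) fsc _ Ni bsp).
  by move=> y /sqsub; rewrite in_setE => Hy; split => //; apply/inSC; apply: H.
split; last exact: fwd.
split.
  by move=> H; exists SF; exact: fwd.
move=> [X [XS PsiE]] a Ha.
have Psia : Psi a := SFsub a Ha.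
have dF : F eD := DF _ DeD.
have Xpsi x : X x -> Psi x.
  move=> Hx; rewrite PsiE; split; last by apply: SCsub; exact: (XS x Hx).1.
  exists [:: x]; split; last exact: (memv_span (mem_head _ _)).
  by move=> y; rewrite inE => /eqP ->; rewrite in_setE.
have XposD x : X x -> 0 < dotE eD x by move=> Hx; exact: ((XS x Hx).2).2 eD DeD.
have aPhi : Phi a by apply: subPsi.
have aposD : 0 < dotE eD a := (SFpos a Ha).2 eD dF.
have [sq [sqX asp]] : rspan X a by move: Psia; rewrite PsiE => -[].
have supp (i : 'I_(size sc)) : ~ X sc`_i -> coord (in_tuple sc) i a = 0.
  move=> Ni; apply: (coord_span0 (P := X) fsc _ Ni asp).
  by move=> y /sqX; rewrite in_setE => Hy; split => //; apply/inSC; exact: (XS y Hy).1.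
have Hra := repC _ aPhi.
have nn : forall i, 0 <= coord (in_tuple sc) i a.
  apply: (rep_nonneg Hra aposD) => i Hi; apply: XposD.
  by apply: contrapT => Ni; move/eqP: Hi; apply; exact: supp.
have [i ci] : exists i, 0 < coord (in_tuple sc) i a.
  apply: contrapT => /forallNP H.
  have a0 : a = 0.
    rewrite [LHS](proj1 Hra) big1 // => i _.
    have -> : coord (in_tuple sc) i a = 0.
      by apply/eqP; rewrite eq_le nn andbT leNgt; apply/negP; exact: H i.
    by rewrite scale0r.
  by case: HPhi => _ Phi0 _ _; apply: Phi0; rewrite -a0.
have Xi : X sc`_i by apply: contrapT => Ni; move: ci; rewrite supp // ltxx.
have Psix := Xpsi _ Xi.
have sfpos (m : 'I_(size sf)) : 0 < dotE eD sf`_m.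
  by apply: (SFpos _ _).2 => //; apply/inSF; apply: mem_nth.
have lx_nn x' : X x' -> forall m, 0 <= coord (in_tuple sf) m x'.
  by move=> Hx'; apply: (rep_nonneg (repF _ (Xpsi _ Hx')) (XposD _ Hx')) => m _.
have Hrx := repF _ Psix.
have ja : (index a sf < size sf)%N by rewrite index_mem; apply/inSF.
pose j0 := Ordinal ja.
have aj : sf`_j0 = a := nth_index 0 ((inSF a).1 Ha).
have zero m : m != j0 -> coord (in_tuple sf) m sc`_i = 0.
  move=> mj.
  have H0 : coord (in_tuple sf) m a = 0.
    by rewrite -aj (@coord_free _ _ _ (in_tuple sf) j0 m) // eq_sym (negbTE mj).
  have Hsum : coord (in_tuple sf) m a = \sum_(i0 < size sc)
      coord (in_tuple sc) i0 a * coord (in_tuple sf) m sc`_i0.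
    by rewrite {1}(proj1 Hra) linear_sum; apply: eq_bigr => i0 _; rewrite linearZ.
  have Hterm i0 : 0 <= coord (in_tuple sc) i0 a * coord (in_tuple sf) m sc`_i0.
    have [->|nz] := eqVneq (coord (in_tuple sc) i0 a) 0; first by rewrite mul0r.
    apply: mulr_ge0 => //; apply: lx_nn.
    by apply: contrapT => Ni; move/eqP: nz; apply; exact: supp.
  have S0 : \sum_(i0 < size sc) coord (in_tuple sc) i0 a * coord (in_tuple sf) m sc`_i0 = 0.
    by rewrite -Hsum.
  have := psumr_eq0P (fun i0 _ => Hterm i0) S0 (i := i) isT.
  by move/eqP; rewrite mulf_eq0 (gt_eqF ci) /= => /eqP.
have xa : sc`_i = coord (in_tuple sf) j0 sc`_i *: a.
  rewrite {1}(proj1 Hrx) (bigD1 j0) //= big1 ?addr0 ?aj // => m mj.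
  by rewrite zero // scale0r.
case: HPhi => _ _ red _.
have Pc : Phi (coord (in_tuple sf) j0 sc`_i *: a) by rewrite -xa; apply: subPsi.
case: (red _ _ aPhi Pc) => Hc.
  by move: xa; rewrite Hc scale1r => <-; exact: (XS _ Xi).1.
have := XposD _ Xi; rewrite xa Hc scaleN1r dotEC dotENl dotEC oppr_gt0 => H.
by move: aposD; rewrite ltNge (ltW H).
Qed.
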